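(* Let $F(V)$ be the set of formulas of the logic $\mathrm{q}\L^{*}$. For every $p\in F(V)$, if $\vdash p$ (i.e. $p$ is a theorem of $\mathrm{q}\L^{*}$), then $\models p$ (i.e. $p$ is a tautology).
   Context: Let $V=\{p_1,p_2,\ldots\}$ be a set of propositional variables and $F(V)$ the set of formulas built from $V$ and the constant $1$ with the binary connective $\to$ and the unary connectives $\neg$, ${}^{+}$, ${}^{-}$ (postfix ${}^+,{}^-$ bind tighter than $\neg$, which binds tighter than $\to$). Abbreviations: $p\vee q:=((p^{+}\to q^{+})^{+}\to(\neg p)^{-})\to((q^{-}\to p^{-})^{-}\to p^{-})$; an axiom written $A\leftrightarrow B$ stands for the two axioms $A\to B$ and $B\to A$. Axiom schemas of $\mathrm{q}\L^{*}$ (for all formulas $p,q,r$): (Q1) $(p\to q)\leftrightarrow(\neg q\to\neg p)$; (Q2) $1\leftrightarrow((1\to p)\to 1)$; (Q3) $p\leftrightarrow((q\to q)\to p)$; (Q4) $(p\to q)\leftrightarrow((q^{+}\to p^{-})\to(p^{+}\to q^{-}))$; (Q5) $\neg(p\to q)\leftrightarrow(q\to p)$; (Q6) $(p\to(\neg p\to q))^{+}\leftrightarrow(p^{+}\to(\neg p^{+}\to q^{+}))$; (Q7) $(p\to(q\vee r))\leftrightarrow((p\to r)\vee(p\to q))$; (Q8) $(p\vee(q\vee r))\leftrightarrow((p\vee q)\vee r)$; (Q9) $((p\to 1)\to((q\to 1)\to r))\to((q\to 1)\to((p\to 1)\to r))$; (Q10) $p\to 1$; (Q11) $((1\to 1)\to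 p^{+})\leftrightarrow((p\to 1)\to 1)$ and $((1\to 1)\to p^{-})\leftrightarrow((p\to\neg 1)\to\neg 1)$. Deduction rules: (R1) from $p$ and $p\to q$ infer $(r\to r)\to q$; (R2) from $(r\to r)\to(p\to q)$ infer $p\to q$; (R3) from $p\to q$ and $r\to t$ infer $(q\to r)\to(p\to t)$. A proof of $q_n$ is a finite sequence $q_1,\dots,q_n$ each of which is an axiom or obtained from earlier members by a rule; then we write $\vdash q_n$. A valuation is a map $v^{*}:F(V)\to[-1,1]\times[-1,1]$ such that for all $p,q$, writing $v^{*}(p)=\langle a,b\rangle$ and $v^{*}(q)=\langle c,d\rangle$: $v^{*}(1)=\langle 1,0\rangle$; $v^{*}(\neg p)=\langle -a,-b\rangle$; $v^{*}(p\to q)=\langle\min\{1,\max\{-1,c-a\}\},0\rangle$; $v^{*}(p^{+})=\langle\max\{0,a\},b\rangle$ and $v^{*}(p^{-})=\langle\min\{0,a\},b\rangle$. A formula $p$ is a tautology, written $\models p$, if $v^{*}(p)\in[0,1]\times[0,1]$ for every valuation $v^{*}$. *)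

(* Defs.v *)
From Stdlib Require Import Reals.
Open Scope R_scope.

Inductive form : Type :=
  | Var : nat -> form
  | One : form
  | Imp : form -> form -> form
  | Neg : form -> form
  | Pls : form -> form
  | Mns : form -> form.

Definition Or (p q : form) : form :=
  Imp (Imp (Pls (Imp (Pls p) (Pls q))) (Mns (Neg p)))
      (Imp (Mns (Imp (Mns q) (Mns p))) (Mns p)).

(* IsAxiom instances of qL*; an axiom A <-> B yields both A -> B and B -> A. *)
Inductive Iff_ax (A B : form) : form -> Prop :=
  | iff_l : Iff_ax A B (Imp A B)
  | iff_r : Iff_ax A B (Imp B A).

Inductive IsAxiom : form -> Prop :=
  | Q1 p q f : Iff_ax (Imp p q) (Imp (Neg q) (Neg p)) f -> IsAxiom f
  | Q2 p f : Iff_ax One (Imp (Imp One p) One) f -> IsAxiom f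
  | Q3 p q f : Iff_ax p (Imp (Imp q q) p) f -> IsAxiom f
  | Q4 p q f :
      Iff_ax (Imp p q) (Imp (Imp (Pls q) (Mns p)) (Imp (Pls p) (Mns q))) f ->
      IsAxiom f
  | Q5 p q f : Iff_ax (Neg (Imp p q)) (Imp q p) f -> IsAxiom f
  | Q6 p q f :
      Iff_ax (Pls (Imp p (Imp (Neg p) q)))
             (Imp (Pls p) (Imp (Neg (Pls p)) (Pls q))) f -> IsAxiom f
  | Q7 p q r f :
      Iff_ax (Imp p (Or q r)) (Or (Imp p r) (Imp p q)) f -> IsAxiom f
  | Q8 p q r f : Iff_ax (Or p (Or q r)) (Or (Or p q) r) f -> IsAxiom f
  | Q9 p q r :
      IsAxiom (Imp (Imp (Imp p One) (Imp (Imp q One) r))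
                 (Imp (Imp q One) (Imp (Imp p One) r)))
  | Q10 p : IsAxiom (Imp p One)
  | Q11a p f :
      Iff_ax (Imp (Imp One One) (Pls p)) (Imp (Imp p One) One) f -> IsAxiom f
  | Q11b p f :
      Iff_ax (Imp (Imp One One) (Mns p)) (Imp (Imp p (Neg One)) (Neg One)) f ->
      IsAxiom f.

(* |- p : p is the last member of a proof (finite sequence of axioms and
   rule applications); equivalently, the least set closed under: *)
Inductive Provable : form -> Prop :=
  | P_ax p : IsAxiom p -> Provable p
  | P_R1 p q r : Provable p -> Provable (Imp p q) -> Provable (Imp (Imp r r) q)
  | P_R2 p q r : Provable (Imp (Imp r r) (Imp p q)) -> Provable (Imp p q)
  | P_R3 p q r t : Provable (Imp p q) -> Provable (Imp r t) ->
                   Provable (Imp (Imp q r) (Imp p t)).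

Definition in_unit (x : R) : Prop := -1 <= x <= 1.

Definition valuation (v : form -> R * R) : Prop :=
  (forall p, in_unit (fst (v p)) /\ in_unit (snd (v p))) /\
  v One = (1, 0) /\
  (forall p, v (Neg p) = (- fst (v p), - snd (v p))) /\
  (forall p q, v (Imp p q) =
      (Rmin 1 (Rmax (-1) (fst (v q) - fst (v p))), 0)) /\
  (forall p, v (Pls p) = (Rmax 0 (fst (v p)), snd (v p))) /\
  (forall p, v (Mns p) = (Rmin 0 (fst (v p)), snd (v p))).

Definition tautology (p : form) : Prop :=
  forall v, valuation v ->
    (0 <= fst (v p) <= 1) /\ (0 <= snd (v p) <= 1).

(* Main.v *)
Require Import Defs.
From Stdlib Require Import Reals Lra.
Open Scope R_scope.

Lemma Rmax_spec a b : (a <= b /\ Rmax a b = b) \/ (b < a /\ Rmax a b = a).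
Proof. unfold Rmax; destruct (Rle_dec a b); lra. Qed.
Lemma Rmin_spec a b : (a <= b /\ Rmin a b = a) \/ (b < a /\ Rmin a b = b).
Proof. unfold Rmin; destruct (Rle_dec a b); lra. Qed.
Ltac nomm t := lazymatch t with context [Rmax _ _] => fail | context [Rmin _ _] => fail | _ => idtac end.
Ltac brute :=
  repeat match goal with
  | |- context [Rmax ?a ?b] => nomm a; nomm b;
      let E := fresh in destruct (Rmax_spec a b) as [[? E]|[? E]]; rewrite E; clear E; try (intros; exfalso; lra)
  | |- context [Rmin ?a ?b] => nomm a; nomm b;
      let E := fresh in destruct (Rmin_spec a b) as [[? E]|[? E]]; rewrite E; clear E; try (intros; exfalso; lra)
  end; intros; lra.

Ltac absv v Hb :=
  repeat match goal with |- context [fst (v ?p)] =>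
    let x := fresh "x" in destruct (Hb p) as [[? ?] _];
    set (x := fst (v p)) in *; clearbody x end.

Lemma or_val v p q : valuation v ->
  fst (v (Or p q)) = Rmax (fst (v p)) (fst (v q)).
Proof.
  intros [Hb [H1 [HN [HI [HP HM]]]]].
  unfold Or. repeat first [rewrite HI | rewrite HP | rewrite HM | rewrite HN]; simpl.
  absv v Hb. brute.
Qed.

Lemma imp_taut A B : (forall v, valuation v -> fst (v A) <= fst (v B)) ->
  tautology (Imp A B).
Proof.
  intros H v Hv. pose proof (H v Hv) as Hle.
  destruct Hv as [Hb [H1 [HN [HI [HP HM]]]]].
  rewrite HI; simpl. revert Hle. absv v Hb. brute.
Qed.

Ltac simp Hv :=
  let Hv' := fresh in pose proof Hv as Hv';
  destruct Hv' as [Hb [H1 [HN [HI [HP HM]]]]];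
  repeat first [ rewrite (or_val _ _ _ Hv) | rewrite HI | rewrite HP | rewrite HM
               | rewrite HN | rewrite H1 ]; simpl.

Lemma ax_taut f : IsAxiom f -> tautology f.
Proof.
  intros Hf; destruct Hf as [p q f Hi|p f Hi|p q f Hi|p q f Hi|p q f Hi|p q f Hi
    |p q r f Hi|p q r f Hi|p q r|p|p f Hi|p f Hi];
  try destruct Hi; apply imp_taut; intros v Hv; simp Hv; absv v Hb; brute.
Qed.

Theorem proposition5p6 : forall p : form, Provable p -> tautology p.
Proof.
  intros p Hp; induction Hp.
  - now apply ax_taut.
  - apply imp_taut; intros v Hv.
    specialize (IHHp1 v Hv); specialize (IHHp2 v Hv).
    destruct Hv as [Hb [H1 [HN [HI [HP HM]]]]].
    rewrite !HI in *; simpl in *. revert IHHp1 IHHp2. absv v Hb. brute.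
  - intros v Hv. specialize (IHHp v Hv).
    destruct Hv as [Hb [H1 [HN [HI [HP HM]]]]].
    repeat (rewrite HI in *); simpl in *.
    revert IHHp. absv v Hb. brute.
  - apply imp_taut; intros v Hv.
    specialize (IHHp1 v Hv); specialize (IHHp2 v Hv).
    destruct Hv as [Hb [H1 [HN [HI [HP HM]]]]].
    rewrite !HI in *; simpl in *.
    revert IHHp1 IHHp2. absv v Hb. brute.
Qed.
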